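(* Let $F$ be a closed $\mathfrak{sl}_N$-foam and let $c,c'$ be two colorings of $F$ related by a Kempe move relative to the pigments $1$ and $2$. Then for every pigment $k\ge 3$, $$\theta^+_{1k}(F,c)+\theta^+_{2k}(F,c)\equiv\theta^+_{1k}(F,c')+\theta^+_{2k}(F,c')\pmod 2.$$
   Context: Fix $N\ge1$, pigments $\mathbb{P}=\{1,\dots,N\}$ with natural order. An $\mathfrak{sl}_N$-foam is obtained by gluing along their boundaries finitely many facets (compact connected oriented surfaces with boundary) labelled by $\{0,\dots,N\}$, locally modelled on: a disc in a facet; three facets labelled $a,b,a+b$ meeting along an oriented arc (a binding), whose orientation agrees with the boundary orientation of the facets labelled $a,b$ and disagrees with that of the facet labelled $a+b$, and which carries a cyclic ordering of its three facets; or a singular point (cone over the 1-skeleton of a tetrahedron) where six facets labelled $a,b,c,a+b,b+c,a+b+c$ meet along four bindings, with compatible cyclic orderings. Closed means compact without boundary. A coloring $c$ assigns to each facet $f$ a subset $c(f)\subseteq\mathbb{P}$ of cardinality the label of $f$, such that at each binding with facets labelled $a,b,a+b$ the colors of the first two have union equal to the color of the third. $F_i(c)$ is the closed surface formed by the facets whose color contains $i$; $F_{ij}(c)$ is the closed surface formed by facets whose color contains exactly one of $i,j$. For $i<j$, a binding with facets $f_1,f_2,f_3$ with $i\in c(f_1)$, $j\in c(f_2)$, $\{i,j\}\subseteq c(f_3)$ is positive w.r.t. $(i,j)$ if its cyclic order is $(f_1,f_2,f_3)$ and negative otherwise; $F_i(c)\cap F_j(c)\cap F_{ij}(c)$ is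 a disjoint union of circles each consisting entirely of positive or entirely of negative bindings; $\theta^+_{ij}(F,c)$ denotes the number of positive such circles. A Kempe move relative to $i$ and $j$ along $\Sigma$: given a coloring $c$ and a closed subsurface $\Sigma$ of $F_{ij}(c)$ (a union of connected components), the coloring $c'$ is obtained from $c$ by exchanging the pigments $i$ and $j$ in the colors of all facets contained in $\Sigma$ (and leaving all other facets unchanged). *)

(* Defs.v *)
From mathcomp Require Import all_boot.
Set Implicit Arguments. Unset Strict Implicit. Unset Printing Implicit Defensive.

(* Pigments {1,...,N} are represented by 'I_N : pigment p <-> ordinal p-1
   (natural order preserved). *)

(* Combinatorial data of a closed foam:
   - facets, bindings, singular vertices are finite types;
   - lab f : label of facet f;
   - bfac b : the three facets around binding b, listed in the cyclic order
     (bfac b 0, bfac b 1, bfac b 2) carried by b; bfac b 2 is the facet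
     labelled a+b, bfac b 0 and bfac b 1 are those labelled a, b;
   - isarc b : b is an arc ending at singular points (otherwise b is a
     closed circle without singular points);
   - an arc binding b has two ends (b,false) (its tail, the binding being
     oriented from (b,false) to (b,true)) and (b,true) (its head);
   - vend v p (p : 'I_4) : the binding end at position p of the singular
     point v;  vfac v q (q : 'I_6) : the facets a,b,c,a+b,b+c,a+b+c at v
     (indices 0..5);  vchir v : which of the two mirror local models. *)
Record foam (Facet Binding Vertex : finType) := Foam {
  lab : Facet -> nat;
  bfac : Binding -> 'I_3 -> Facet;
  isarc : Binding -> bool;
  vend : Vertex -> 'I_4 -> Binding * bool;
  vfac : Vertex -> 'I_6 -> Facet;
  vchir : Vertex -> bool
}.

Section Foams.
Variables (Facet Binding Vertex : finType) (F : foam Facet Binding Vertex).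

Definition i3 (n : nat) : 'I_3 := inord n.
Definition i6 (n : nat) : 'I_6 := inord n.

(* Local model at a singular point (cone over the tetrahedron 1-skeleton):
   the four bindings are (a,b,a+b), (a+b,c,a+b+c), (b,c,b+c), (a,b+c,a+b+c),
   with compatible cyclic orders: all as listed, or all mirrored (first two
   entries swapped). *)
Definition model_triple (p : 'I_4) : nat * nat * nat :=
  match val p with
  | 0 => (0, 1, 3)
  | 1 => (3, 2, 5)
  | 2 => (1, 2, 4)
  | _ => (0, 4, 5)
  end%N.

Definition vertex_ok (v : Vertex) : bool :=
  [forall p : 'I_4,
    let: (x, y, z) := model_triple p in
    let: (b, _) := vend F v p in
    let: (x', y') := if vchir F v then (x, y) else (y, x) in
    [forall t : 'I_3,
      bfac F b t == vfac F v (i6 (if val t == 0 then x' else if val t == 1 then y' else z))]]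
  (* orientations: bindings at positions 0,1 point the same way (both out of
     or both into v), those at positions 2,3 the opposite way. *)
  && ((vend F v (inord 0)).2 == (vend F v (inord 1)).2)
  && ((vend F v (inord 2)).2 == (vend F v (inord 3)).2)
  && ((vend F v (inord 0)).2 != (vend F v (inord 2)).2).

Definition closed_foam (N : nat) : Prop :=
  (forall f, lab F f <= N)
  /\ (forall b, lab F (bfac F b (i3 2)) = lab F (bfac F b (i3 0)) + lab F (bfac F b (i3 1)))
  (* every end of an arc is attached at exactly one position of one singular
     point; circles have no ends *)
  /\ (forall b s, #|[set vp : Vertex * 'I_4 | vend F vp.1 vp.2 == (b, s)]| = nat_of_bool (isarc F b))
  /\ (forall v, vertex_ok v).

Variable N : nat.
Implicit Types (c : Facet -> {set 'I_N}) (i j : 'I_N).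

Definition coloring c : Prop :=
  (forall f, #|c f| = lab F f)
  /\ (forall b, c (bfac F b (i3 0)) :|: c (bfac F b (i3 1)) = c (bfac F b (i3 2))).

Definition inFij c i j (f : Facet) : bool := (i \in c f) != (j \in c f).

Definition fadj c i j (f g : Facet) : bool :=
  inFij c i j f && inFij c i j g &&
  [exists b, [exists p, [exists q, (bfac F b p == f) && (bfac F b q == g)]]].

(* S is (the set of facets of) a closed subsurface of F_ij(c), i.e. a union of
   connected components *)
Definition closed_subsurface c i j (S : {set Facet}) : Prop :=
  (forall f, f \in S -> inFij c i j f)
  /\ (forall f g, fadj c i j f g -> (f \in S) = (g \in S)).

Definition swp i j (x : 'I_N) : 'I_N := if x == i then j else if x == j then i else x.

Definition swap_color i j (A : {set 'I_N}) : {set 'I_N} := [set x | swp i j x \in A].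

Definition kempe_move i j c c' : Prop :=
  exists S : {set Facet}, closed_subsurface c i j S /\
    forall f, c' f = if f \in S then swap_color i j (c f) else c f.

(* binding b lies in F_i(c) /\ F_j(c) /\ F_ij(c) *)
Definition ijbind c i j (b : Binding) : bool :=
  ((i \in c (bfac F b (i3 0))) && (j \in c (bfac F b (i3 1))))
  || ((j \in c (bfac F b (i3 0))) && (i \in c (bfac F b (i3 1)))).

(* positive w.r.t. (i,j): cyclic order (f_i, f_j, f_3) *)
Definition posbind c i j (b : Binding) : bool :=
  (i \in c (bfac F b (i3 0))) && (j \in c (bfac F b (i3 1))).

Definition badj c i j (b b' : Binding) : bool :=
  ijbind c i j b && ijbind c i j b' &&
  [exists v, [exists p, [exists q, ((vend F v p).1 == b) && ((vend F v q).1 == b')]]].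

(* theta^+_ij(F,c): number of circles (connected components) of
   F_i /\ F_j /\ F_ij made of positive bindings *)
Definition theta_pos c i j : nat :=
  #|[set [set b' | connect (badj c i j) b b'] | b in [set b | posbind c i j b]]|.

End Foams.

(* Main.v *)
Require Import Defs.
From mathcomp Require Import all_boot.
From mathcomp Require Import fingroup perm.
Set Implicit Arguments. Unset Strict Implicit. Unset Printing Implicit Defensive.

Definition trip := (bool * bool * bool)%type.
Definition lm (t : trip) (q : nat) : bool :=
  let: (a, b, c) := t in
  match q with 0 => a | 1 => b | 2 => c | 3 => a || b | 4 => b || c | _ => [|| a, b | c] end.
Definition exb (t : trip) : bool :=
  let: (a, b, c) := t in ~~ (a && b) && ~~ (b && c) && ~~ (a && c).
Definition mtn (p : nat) : nat * nat * nat :=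
  match p with
  | 0 => (0, 1, 3)
  | 1 => (3, 2, 5)
  | 2 => (1, 2, 4)
  | _ => (0, 4, 5)
  end%N.
Definition slotn (ch : bool) (p t : nat) : nat :=
  let: (x, y, z) := mtn p in
  let: (x', y') := if ch then (x, y) else (y, x) in
  if t == 0 then x' else if t == 1 then y' else z.
Definition IJn ch ti tk p :=
  (lm ti (slotn ch p 0) && lm tk (slotn ch p 1)) || (lm tk (slotn ch p 0) && lm ti (slotn ch p 1)).
Definition POSn ch ti tk p := lm ti (slotn ch p 0) && lm tk (slotn ch p 1).
Definition lpartn ch ti tk p : nat :=
  head p [seq q <- [:: 0; 1; 2; 3] | (q != p) && IJn ch ti tk q].
Definition F12s (t1 t2 : trip) q := lm t1 q != lm t2 q.
Definition F12p ch t1 t2 p := [|| F12s t1 t2 (slotn ch p 0), F12s t1 t2 (slotn ch p 1) | F12s t1 t2 (slotn ch p 2)].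
Definition CRn ch t1 t2 tk p := [&& lm t1 (slotn ch p 0), lm t2 (slotn ch p 0) & lm tk (slotn ch p 1)].
Definition Kn ch t1 t2 tk p := [&& lm t1 (slotn ch p 0), ~~ lm t2 (slotn ch p 0) & lm tk (slotn ch p 1)].

Definition trips : seq trip :=
  [seq t <- [:: (false,false,false); (true,false,false); (false,true,false); (false,false,true);
     (true,true,false); (true,false,true); (false,true,true); (true,true,true)] | exb t].
Lemma trips_mem t : exb t -> t \in trips.
Proof. by case: t => [[[] []] []]. Qed.
Definition bools := [:: true; false].
Lemma bools_mem b : b \in bools. Proof. by case: b. Qed.
Definition ps := [:: 0; 1; 2; 3].
Lemma ps_mem p : p < 4 -> p \in ps. Proof. by case: p => [|[|[|[|]]]]. Qed.

Definition loc1 ch ti tk p :=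
  IJn ch ti tk p ==>
  let q := lpartn ch ti tk p in
  [&& q < 4, q != p, IJn ch ti tk q, lpartn ch ti tk q == p, (q < 2) != (p < 2)
    & POSn ch ti tk q == POSn ch ti tk p].
Definition loc2 ch ti tk p q :=
  [&& IJn ch ti tk p, IJn ch ti tk q & q != p] ==> (q == lpartn ch ti tk p).

Definition chk12 := all (fun ch => all (fun ti => all (fun tk => all (fun p =>
   loc1 ch ti tk p && all (fun q => loc2 ch ti tk p q) ps) ps) trips) trips) bools.
Lemma chk12_ok : chk12. Proof. by vm_compute. Qed.

Lemma Loc1 ch ti tk p : exb ti -> exb tk -> p < 4 -> loc1 ch ti tk p.
Proof.
move=> /trips_mem hi /trips_mem hk /ps_mem hp.
have := chk12_ok; move/allP/(_ ch (bools_mem ch))/allP/(_ ti hi)/allP/(_ tk hk)/allP/(_ p hp).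
by case/andP.
Qed.
Lemma Loc2 ch ti tk p q : exb ti -> exb tk -> p < 4 -> q < 4 -> loc2 ch ti tk p q.
Proof.
move=> /trips_mem hi /trips_mem hk /ps_mem hp /ps_mem hq.
have := chk12_ok; move/allP/(_ ch (bools_mem ch))/allP/(_ ti hi)/allP/(_ tk hk)/allP/(_ p hp).
by case/andP=> _ /allP/(_ q hq).
Qed.

Definition loc3 ch t1 t2 (ms : seq bool) :=
  all (fun p => all (fun t => all (fun t' =>
     (F12s t1 t2 (slotn ch p t) && F12s t1 t2 (slotn ch p t')) ==>
       (nth false ms (slotn ch p t) == nth false ms (slotn ch p t'))) [:: 0;1;2]) [:: 0;1;2]) ps
  ==> all (fun q => all (fun q' => (F12s t1 t2 q && F12s t1 t2 q') ==> (nth false ms q == nth false ms q'))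
        [:: 0;1;2;3;4;5]) [:: 0;1;2;3;4;5].
Fixpoint bsq n : seq (seq bool) :=
  if n is n'.+1 then [seq true :: s | s <- bsq n'] ++ [seq false :: s | s <- bsq n'] else [:: [::]].
Definition bseqs := bsq 6.
Definition chk3 := all (fun ch => all (fun t1 => all (fun t2 => all (fun ms => loc3 ch t1 t2 ms) bseqs) trips) trips) bools.
Lemma chk3_ok : chk3. Proof. by vm_compute. Qed.

Definition tl (l : bool) (t1 t2 : trip) := if l then t2 else t1.
Definition loc4 ch (W l : bool) p t1 t2 tk :=
  POSn ch (tl l t1 t2) tk p ==>
  let fl q := W && F12p ch t1 t2 q in
  let cr q := CRn ch t1 t2 tk q in
  let l1 := l (+) (cr p && W) in
  let q1 := lpartn ch (tl l1 t1 t2) tk p in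
  let l2 := l1 (+) (cr q1 && W) in
  let l3 := l (+) fl p in
  let q3 := lpartn ch (tl l3 (if W then t2 else t1) (if W then t1 else t2)) tk p in
  (q1 == q3) && (l2 (+) fl q1 == l3).
Definition chk4 := all (fun ch => all (fun W => all (fun l => all (fun p => all (fun t1 => all (fun t2 => all (fun tk =>
  loc4 ch W l p t1 t2 tk) trips) trips) trips) ps) bools) bools) bools.
Lemma chk4_ok : chk4. Proof. by vm_compute. Qed.


Section Bridge.
Variables (N : nat) (Facet Binding Vertex : finType) (F : foam Facet Binding Vertex).
Hypothesis HF : closed_foam F N.

Lemma i3v n : n < 3 -> val (i3 n) = n. Proof. by move=> h; exact: inordK. Qed.
Lemma i6v n : n < 6 -> val (i6 n) = n. Proof. by move=> h; exact: inordK. Qed.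

Lemma vokP v : vertex_ok F v. Proof. by case: HF => _ [_ [_ h]]; apply: h. Qed.

Lemma vok_slot v p t : bfac F (vend F v p).1 t = vfac F v (i6 (slotn (vchir F v) (val p) (val t))).
Proof.
have /andP[/andP[/andP[/forallP /(_ p) H _] _] _] := vokP v.
move: H; rewrite /slotn /model_triple /mtn.
case: (vend F v p) => b s /=.
case: p => [[|[|[|[|]]]] hp] //=; case: (vchir F v) => /forallP /(_ t) /eqP ->; by [].
Qed.

Lemma slotn_lt ch p t : slotn ch p t < 6.
Proof. by rewrite /slotn /mtn; case: ch; case: p => [|[|[|[|]]]]; case: t => [|[|]]. Qed.

Lemma orient v (p q : 'I_4) : (val p < 2) != (val q < 2) -> (vend F v p).2 != (vend F v q).2.
Proof.
have /andP[/andP[/andP[_ /eqP h01] /eqP h23] h02] := vokP v.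
move=> H; rewrite -(inord_val p) -(inord_val q).
case: p H => [[|[|[|[|m]]]] hp] //; case: q => [[|[|[|[|m']]]] hq] //= _;
  rewrite -?h01 -?h23; first [done | by rewrite eq_sym].
Qed.

Definition bits (col : Facet -> {set 'I_N}) (x : 'I_N) v : trip :=
  (x \in col (vfac F v (i6 0)), x \in col (vfac F v (i6 1)), x \in col (vfac F v (i6 2))).

Lemma vok_slotn v p t : p < 4 -> t < 3 ->
  bfac F (vend F v (inord p)).1 (inord t) = vfac F v (i6 (slotn (vchir F v) p t)).
Proof. by move=> hp ht; rewrite vok_slot /= !inordK. Qed.

Section Col.
Variable col : Facet -> {set 'I_N}.
Hypothesis Hc : coloring F col.

Lemma munion b x : x \in col (bfac F b (i3 2)) = (x \in col (bfac F b (i3 0))) || (x \in col (bfac F b (i3 1))).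
Proof. by case: Hc => _ h; rewrite -h inE. Qed.

Lemma disj b x : x \in col (bfac F b (i3 0)) -> x \in col (bfac F b (i3 1)) -> False.
Proof.
move=> h0 h1; case: Hc => hl hu; case: HF => _ [hlab _].
have := cardsUI (col (bfac F b (i3 0))) (col (bfac F b (i3 1))).
rewrite hu !hl hlab => /eqP; rewrite -[X in _ == X]addn0 eqn_add2l cards_eq0 => /eqP h.
by have := in_set0 x; rewrite -h inE h0 h1.
Qed.

Lemma munion_v v x p t0 t1 t2 : p < 4 ->
  slotn (vchir F v) p 0 = t0 -> slotn (vchir F v) p 1 = t1 -> slotn (vchir F v) p 2 = t2 ->
  x \in col (vfac F v (i6 t2)) = (x \in col (vfac F v (i6 t0))) || (x \in col (vfac F v (i6 t1))).
Proof.
move=> hp <- <- <-.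
by rewrite -!vok_slotn // munion.
Qed.

Lemma disj_v v x p : p < 4 ->
  x \in col (vfac F v (i6 (slotn (vchir F v) p 0))) -> x \in col (vfac F v (i6 (slotn (vchir F v) p 1))) -> False.
Proof. by move=> hp; rewrite -!vok_slotn //; apply: disj. Qed.

Lemma memslot v x q : q < 6 -> x \in col (vfac F v (i6 q)) = lm (bits col x v) q.
Proof.
have h3 : x \in col (vfac F v (i6 3)) = (x \in col (vfac F v (i6 0))) || (x \in col (vfac F v (i6 1))).
  case E: (vchir F v).
    by have := @munion_v v x 0 0 1 3 isT; rewrite E => /(_ erefl erefl erefl).
  by have := @munion_v v x 0 1 0 3 isT; rewrite E orbC => /(_ erefl erefl erefl).
have h4 : x \in col (vfac F v (i6 4)) = (x \in col (vfac F v (i6 1))) || (x \in col (vfac F v (i6 2))).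
  case E: (vchir F v).
    by have := @munion_v v x 2 1 2 4 isT; rewrite E => /(_ erefl erefl erefl).
  by have := @munion_v v x 2 2 1 4 isT; rewrite E orbC => /(_ erefl erefl erefl).
have h5 : x \in col (vfac F v (i6 5)) = (x \in col (vfac F v (i6 3))) || (x \in col (vfac F v (i6 2))).
  case E: (vchir F v).
    by have := @munion_v v x 1 3 2 5 isT; rewrite E => /(_ erefl erefl erefl).
  by have := @munion_v v x 1 2 3 5 isT; rewrite E orbC => /(_ erefl erefl erefl).
case: q => [|[|[|[|[|[|q]]]]]] // _; rewrite /lm /bits //.
by rewrite h5 h3 -orbA.
Qed.

Lemma exbits x v : exb (bits col x v).
Proof.
rewrite /exb /bits.
apply/andP; split; [apply/andP; split|]; apply/negP => /andP[h1 h2].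
- by apply: (@disj_v v x 0) => //; case: (vchir F v).
- by apply: (@disj_v v x 2) => //; case: (vchir F v).
- apply: (@disj_v v x 3) => //; rewrite !memslot ?slotn_lt //;
  case: (vchir F v); rewrite /= ?h1 ?h2 ?orbT //.
Qed.

Lemma memb_pos v p t x : x \in col (bfac F (vend F v p).1 t) = lm (bits col x v) (slotn (vchir F v) (val p) (val t)).
Proof. by rewrite vok_slot memslot // slotn_lt. Qed.

Lemma ij_loc i k' v p : ijbind F col i k' (vend F v p).1 = IJn (vchir F v) (bits col i v) (bits col k' v) (val p).
Proof. by rewrite /ijbind /IJn !memb_pos !i3v. Qed.

Lemma pos_loc i k' v p : posbind F col i k' (vend F v p).1 = POSn (vchir F v) (bits col i v) (bits col k' v) (val p).
Proof. by rewrite /posbind /POSn !memb_pos !i3v. Qed.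
End Col.


Lemma end_card b s : #|[set vp : Vertex * 'I_4 | vend F vp.1 vp.2 == (b, s)]| = isarc F b.
Proof. by case: HF => _ [_ [h _]]; apply: h. Qed.

Lemma end_uniq v p v' p' e : vend F v p = e -> vend F v' p' = e -> (v, p) = (v', p').
Proof.
move=> h h'; have: #|[set vp : Vertex * 'I_4 | vend F vp.1 vp.2 == e]| <= 1.
  by case: e h h' => b s _ _; rewrite end_card; case: (isarc F b).
move/card_le1P => H.
have hin : (v, p) \in [set vp : Vertex * 'I_4 | vend F vp.1 vp.2 == e] by rewrite inE h.
have := H _ hin (v', p'); rewrite inE /= h' eqxx => /esym/eqP.
by move=> ->.
Qed.

Lemma end_arc v p : isarc F (vend F v p).1.
Proof.
have := end_card (vend F v p).1 (vend F v p).2; rewrite -surjective_pairing.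
case: (isarc F _) => // /eqP; rewrite cards_eq0 => /eqP h.
by have := in_set0 (v, p); rewrite -h inE eqxx.
Qed.

Lemma arc_end b s : isarc F b -> exists vp : Vertex * 'I_4, vend F vp.1 vp.2 = (b, s).
Proof.
move=> ha; have := end_card b s; rewrite ha => /eqP; rewrite eqn_leq => /andP[_].
rewrite card_gt0 => /set0Pn[vp]; rewrite inE => /eqP h; by exists vp.
Qed.

Definition endpos (e : Binding * bool) := [pick vp : Vertex * 'I_4 | vend F vp.1 vp.2 == e].

Lemma endposP e vp : endpos e = Some vp -> vend F vp.1 vp.2 = e.
Proof. by rewrite /endpos; case: pickP => // x /eqP h [<-]. Qed.

Lemma endposE v p : endpos (vend F v p) = Some (v, p).
Proof.
rewrite /endpos; case: pickP => [[v' p'] /eqP /= h|].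
  by rewrite (end_uniq h (erefl _)).
by move/(_ (v, p)); rewrite eqxx.
Qed.

Lemma endpos_none b s v p : endpos (b, s) = None -> vend F v p != (b, s).
Proof. by rewrite /endpos; case: pickP => // /(_ (v, p)) /= ->. Qed.

Lemma endpos_none_arc b : endpos (b, true) = None -> ~~ isarc F b.
Proof.
move=> h; apply/negP => /(arc_end true) [[v p] /= e].
by have := endpos_none v p h; rewrite e eqxx.
Qed.

Section Pig.
Variables (p1 p2 k : 'I_N).
Definition pig (l : bool) := if l then p2 else p1.
Arguments pig : simpl never.

Definition lq col (l : bool) (vp : Vertex * 'I_4) : 'I_4 :=
  inord (lpartn (vchir F vp.1) (bits col (pig l) vp.1) (bits col k vp.1) (val vp.2)).

Definition nxt col (l : bool) (b : Binding) : Binding :=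
  if endpos (b, true) is Some vp then (vend F vp.1 (lq col l vp)).1 else b.

Definition sg col (d : Binding * bool) : Binding * bool :=
  if posbind F col (pig d.2) k d.1 then (nxt col d.2 d.1, d.2) else d.

Lemma pos_ij (col : Facet -> {set 'I_N}) i j b : posbind F col i j b -> ijbind F col i j b.
Proof. by rewrite /posbind /ijbind => ->. Qed.

Section Col2.
Variable col : Facet -> {set 'I_N}.
Hypothesis Hc : coloring F col.

Lemma loc1P l v p : ijbind F col (pig l) k (vend F v p).1 ->
  let q := lq col l (v, p) in
  [/\ val q = lpartn (vchir F v) (bits col (pig l) v) (bits col k v) (val p), q != p,
      ijbind F col (pig l) k (vend F v q).1,
      lpartn (vchir F v) (bits col (pig l) v) (bits col k v) (val q) = val p
    & (vend F v q).2 != (vend F v p).2 /\ posbind F col (pig l) k (vend F v q).1 = posbind F col (pig l) k (vend F v p).1].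
Proof.
rewrite ij_loc // => hij.
have := Loc1 (vchir F v) (exbits Hc (pig l) v) (exbits Hc k v) (ltn_ord p).
rewrite /loc1 hij /= => /and5P[hq4 hqp hijq /eqP hpp /andP[hgr /eqP hpos]].
have vq : val (lq col l (v, p)) = lpartn (vchir F v) (bits col (pig l) v) (bits col k v) (val p).
  by rewrite /lq /= inordK.
split => //.
- by apply: contra hqp => /eqP e; rewrite -vq e.
- by rewrite ij_loc // vq.
- by rewrite vq.
split; first by apply: orient; rewrite vq.
by rewrite !pos_loc // vq.
Qed.

Lemma nxt_spec l b v p : posbind F col (pig l) k b -> vend F v p = (b, true) ->
  let q := lq col l (v, p) in
  [/\ vend F v q = (nxt col l b, false),
      lpartn (vchir F v) (bits col (pig l) v) (bits col k v) (val q) = val p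
    & posbind F col (pig l) k (nxt col l b)].
Proof.
move=> hb e.
have hij : ijbind F col (pig l) k (vend F v p).1 by rewrite e; apply: pos_ij.
have [_ _ _ hlp [hor hpos]] := loc1P hij.
have -> : nxt col l b = (vend F v (lq col l (v, p))).1 by rewrite /nxt -e endposE.
split => //.
- rewrite [LHS]surjective_pairing; congr pair; move: hor; rewrite e /=.
  by case: (vend F v _).2.
- by rewrite hpos e.
Qed.

Lemma nxt_none l b : endpos (b, true) = None -> nxt col l b = b.
Proof. by rewrite /nxt => ->. Qed.

Lemma nxt_pos l b : posbind F col (pig l) k b -> posbind F col (pig l) k (nxt col l b).
Proof.
move=> hb; case E: (endpos (b, true)) => [[v p]|]; last by rewrite nxt_none.
by have [] := nxt_spec hb (endposP E).
Qed.

Lemma sg_inj : injective (sg col).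
Proof.
have key : forall l b b', posbind F col (pig l) k b -> posbind F col (pig l) k b' ->
    nxt col l b = nxt col l b' -> b = b'.
  move=> l b b' hb hb'.
  case E: (endpos (b, true)) => [[v p]|]; case E': (endpos (b', true)) => [[v' p']|].
  - have [h1 h2 _] := nxt_spec hb (endposP E).
    have [h1' h2' _] := nxt_spec hb' (endposP E') => e.
    rewrite e -h1' in h1; case: (end_uniq h1 (erefl _)) => ev eq.
    subst v'; rewrite eq h2' in h2.
    have ep : p = p' by apply: val_inj.
    by have := endposP E; have := endposP E'; rewrite ep /= => -> [].
  - have [h1 _ _] := nxt_spec hb (endposP E).
    rewrite (nxt_none _ E') => e; rewrite e in h1.
    by have := end_arc v (lq col l (v, p)); rewrite h1 /= (negbTE (endpos_none_arc E')).
  - have [h1 _ _] := nxt_spec hb' (endposP E').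
    rewrite (nxt_none _ E) => e; rewrite -e in h1.
    by have := end_arc v' (lq col l (v', p')); rewrite h1 /= (negbTE (endpos_none_arc E)).
  - by rewrite !nxt_none.
move=> [b l] [b' l']; rewrite /sg /=.
case hb: (posbind _ _ _ _ b); case hb': (posbind _ _ _ _ b').
- by case=> e el; subst l'; rewrite (key _ _ _ hb hb' e).
- by case=> e el; subst l'; move: hb'; rewrite -e nxt_pos.
- by case=> e el; subst l'; move: hb; rewrite e nxt_pos.
- by [].
Qed.


Definition sgp : {perm (Binding * bool)} := perm sg_inj.
Lemma sgpE d : sgp d = sg col d. Proof. by rewrite permE. Qed.

Lemma badj_nxt l x : posbind F col (pig l) k x -> nxt col l x = x \/ badj F col (pig l) k x (nxt col l x).
Proof.
move=> hx; case E: (endpos (x, true)) => [[v p]|]; last by left; rewrite nxt_none.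
right; have e := endposP E; have [h1 _ h3] := nxt_spec hx e.
rewrite /badj (pos_ij hx) (pos_ij h3) /=.
apply/existsP; exists v; apply/existsP; exists p; apply/existsP; exists (lq col l (v, p)).
by rewrite /= e h1 /= !eqxx.
Qed.

Lemma sgp_pow i b l : posbind F col (pig l) k b ->
  [/\ ((sgp ^+ i)%g (b, l)).2 = l, posbind F col (pig l) k ((sgp ^+ i)%g (b, l)).1
    & connect (badj F col (pig l) k) b ((sgp ^+ i)%g (b, l)).1].
Proof.
move=> hb; elim: i => [|i [IH1 IH2 IH3]]; first by rewrite expg0 perm1.
rewrite expgSr permM sgpE /sg.
move: IH1 IH2 IH3; case: ((sgp ^+ i)%g (b, l)) => x l' /= -> hx hc.
rewrite hx; split => //; first exact: nxt_pos.
case: (badj_nxt hx) => [-> // | h].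
by apply: connect_trans hc (connect1 h).
Qed.

Lemma porbit_trans (s : {perm (Binding * bool)}) x z : z \in porbit s x -> porbit s z = porbit s x.
Proof. by move=> h; apply/eqP; rewrite eq_porbit_mem. Qed.

Lemma porbit_step (s : {perm (Binding * bool)}) x : porbit s (s x) = porbit s x.
Proof. by have := porbit_perm s 1 x; rewrite expg1. Qed.

Lemma badj_step l x y : posbind F col (pig l) k x -> badj F col (pig l) k x y ->
  posbind F col (pig l) k y /\ [\/ y = x, sg col (x, l) = (y, l) | sg col (y, l) = (x, l)].
Proof.
move=> hx /andP[/andP[hijx hijy] /existsP[v /existsP[p /existsP[q /andP[/eqP ex /eqP ey]]]]].
case: (eqVneq q p) => [eqp | nqp].
  by subst q; rewrite -ey ex; split => //; constructor 1.
have hijp : ijbind F col (pig l) k (vend F v p).1 by rewrite ex.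
have hijq : ijbind F col (pig l) k (vend F v q).1 by rewrite ey.
have := Loc2 (vchir F v) (exbits Hc (pig l) v) (exbits Hc k v) (ltn_ord p) (ltn_ord q).
rewrite /loc2 -!ij_loc // hijp hijq /=.
have -> : (val q != val p) by [].
move=> /eqP hqv.
have eq : q = lq col l (v, p) by rewrite /lq /= -hqv inord_val.
have [_ _ _ hlp [hor hpos]] := loc1P hijp.
rewrite -eq in hlp hor hpos.
have hy : posbind F col (pig l) k y by rewrite -ey hpos ex.
split => //.
case hp: (vend F v p).2.
- have e : vend F v p = (x, true) by rewrite [LHS]surjective_pairing ex hp.
  have [h1 _ _] := nxt_spec hx e.
  have h1' := congr1 fst h1; rewrite /= -eq ey in h1'.
  by constructor 2; rewrite /sg /= hx h1'.
- have e : vend F v q = (y, true).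
    by rewrite [LHS]surjective_pairing ey; move: hor; rewrite hp; case: (vend F v q).2.
  have [h1 h2 _] := nxt_spec hy e.
  have eqp : lq col l (v, q) = p by rewrite /lq /= hlp inord_val.
  have h1' := congr1 fst h1; rewrite /= eqp ex in h1'.
  by constructor 3; rewrite /sg /= hy h1'.
Qed.

Lemma comp_orbit l b : posbind F col (pig l) k b ->
  [set b' | connect (badj F col (pig l) k) b b'] = [set b' | (b', l) \in porbit sgp (b, l)].
Proof.
move=> hb; apply/setP => y; rewrite !inE; apply/idP/idP.
- move/connectP => [pth Hp ->].
  suff H : forall x, posbind F col (pig l) k x -> (x, l) \in porbit sgp (b, l) ->
      path (badj F col (pig l) k) x pth -> (last x pth, l) \in porbit sgp (b, l).
    by apply: H => //; apply: porbit_id.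
  elim: pth {Hp} => [|y' pth IH] x hx hin //= /andP[hxy hpth].
  have [hy' hc] := badj_step hx hxy.
  apply: IH => //.
  case: hc => [-> // | e | e].
  + by rewrite -(porbit_trans hin) -e -sgpE -(porbit_step sgp (x, l)) porbit_id.
  + by rewrite -(porbit_trans hin) -e -sgpE porbit_step porbit_id.
- move/porbitP => [i e].
  have [_ _ hc] := sgp_pow i hb.
  by rewrite -e in hc.
Qed.

Definition rel (d : Binding * bool) := posbind F col (pig d.2) k d.1.

Lemma porbit_irr d : ~~ rel d -> porbit sgp d = [set d].
Proof.
move=> hd.
have fix1 : forall i, (sgp ^+ i)%g d = d.
  elim=> [|i IH]; first by rewrite expg0 perm1.
  by rewrite expgSr permM IH sgpE /sg; move: hd; rewrite /rel => /negbTE ->.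
by apply/setP => z; rewrite inE; apply/porbitP/eqP => [[i ->]|->]; [rewrite fix1 | exists 0; rewrite expg0 perm1].
Qed.

Lemma porbit_lab l b z : posbind F col (pig l) k b -> z \in porbit sgp (b, l) -> z.2 = l /\ rel z.
Proof.
move=> hb /porbitP[i ->]; have [h1 h2 _] := sgp_pow i hb.
by rewrite /rel h1.
Qed.

Lemma card_disjU (T : finType) (A B : {set T}) : A :&: B = set0 -> #|A :|: B| = #|A| + #|B|.
Proof. by move=> h; have := cardsUI A B; rewrite h cards0 addn0. Qed.

Lemma card_porbits : #|porbits sgp| = theta_pos F col p1 k + theta_pos F col p2 k + #|[set d | ~~ rel d]|.
Proof.
pose Phi l := [set porbit sgp (b, l) | b in [set b | posbind F col (pig l) k b]].
pose PhiI := [set porbit sgp d | d in [set d | ~~ rel d]].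
have E : porbits sgp = Phi false :|: Phi true :|: PhiI.
  apply/setP => X; rewrite !inE; apply/imsetP/idP => [[[b l] _ ->]|].
    case hr: (rel (b, l)).
      case: l hr => hr; [apply/orP; left; apply/orP; right | apply/orP; left; apply/orP; left];
        by apply/imsetP; exists b; rewrite ?inE.
    by apply/orP; right; apply/imsetP; exists (b, l); rewrite ?inE ?hr.
  case/orP => [/orP[]|] /imsetP[d _ ->]; [by exists (d, false) | by exists (d, true) | by exists d].
have cI : #|PhiI| = #|[set d | ~~ rel d]|.
  apply: card_in_imset => d d'; rewrite !inE => hd hd'.
  by rewrite !porbit_irr // => /set1_inj.
have cP : forall l, #|Phi l| = theta_pos F col (pig l) k.
  move=> l; rewrite /theta_pos.
  pose G (X : {set Binding}) : {set Binding * bool} := [set (x, l) | x in X].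
  have Ginj : injective G.
    move=> X Y h; apply/setP => x.
    have : ((x, l) \in G X) = ((x, l) \in G Y) by rewrite h.
    have fi : injective (fun x : Binding => (x, l)) by move=> a b [].
    by rewrite /G !(mem_imset _ _ fi).
  have Gc : forall b, posbind F col (pig l) k b ->
      G [set b' | connect (badj F col (pig l) k) b b'] = porbit sgp (b, l).
    move=> b hb; rewrite comp_orbit //; apply/setP => z; apply/imsetP/idP => [[x]|hz].
      by rewrite inE => hx ->.
    have [hz2 _] := porbit_lab hb hz.
    exists z.1; first by rewrite inE; case: z hz hz2 => x l' /= hz e; subst l'.
    by case: z hz hz2 => x l' /= _ e; subst l'.
  rewrite -(card_imset _ Ginj) -imset_comp.
  apply: eq_card => X; rewrite /Phi; apply/imsetP/imsetP => [[b hb ->]|[b hb ->]].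
    by exists b; rewrite // /= Gc //; move: hb; rewrite inE.
  by exists b; rewrite // /= Gc //; move: hb; rewrite inE.
rewrite E card_disjU; last first.
  apply/setP => X; rewrite !inE; apply/negbTE/negP => /andP[/orP h /imsetP[d]].
  rewrite inE => hd eX.
  have : exists b l, posbind F col (pig l) k b /\ X = porbit sgp (b, l).
    by case: h => /imsetP[b]; rewrite inE => hb ->; [exists b, false | exists b, true].
  move=> [b [l [hb eX']]].
  have := porbit_id sgp (b, l); rewrite -eX' eX porbit_irr // inE => /eqP ebl.
  by move: hd; rewrite -ebl /rel /= hb.
rewrite card_disjU; last first.
  apply/setP => X; rewrite !inE; apply/negbTE/negP => /andP[/imsetP[b hb ->] /imsetP[b' hb' e]].
  move: hb hb'; rewrite !inE => hb hb'.
  have := porbit_id sgp (b, false); rewrite e => /(porbit_lab hb') [] //.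
by rewrite (cP false) (cP true) cI.
Qed.
End Col2.

Lemma bsq_mem n (ms : seq bool) : size ms = n -> ms \in bsq n.
Proof.
elim: n ms => [|n IH] [|b ms] // [hs].
rewrite /= mem_cat; case: b; [apply/orP; left | apply/orP; right]; apply: map_f; exact: IH.
Qed.

Lemma Loc3 ch t1 t2 ms : exb t1 -> exb t2 -> size ms = 6 -> loc3 ch t1 t2 ms.
Proof.
move=> /trips_mem h1 /trips_mem h2 /bsq_mem hm.
by have := chk3_ok; move/allP/(_ ch (bools_mem ch))/allP/(_ t1 h1)/allP/(_ t2 h2)/allP/(_ ms hm).
Qed.

Lemma Loc4 ch W l p t1 t2 tk : exb t1 -> exb t2 -> exb tk -> p < 4 -> loc4 ch W l p t1 t2 tk.
Proof.
move=> /trips_mem h1 /trips_mem h2 /trips_mem hk /ps_mem hp.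
have := chk4_ok; move/allP/(_ ch (bools_mem ch))/allP/(_ W (bools_mem W))/allP/(_ l (bools_mem l)).
by move/allP/(_ p hp)/allP/(_ t1 h1)/allP/(_ t2 h2)/allP/(_ tk hk).
Qed.

Section Kempe.
Variables (c c' : Facet -> {set 'I_N}) (S : {set Facet}).
Hypotheses (Hc : coloring F c) (Hc' : coloring F c').
Hypothesis HS : closed_subsurface F c p1 p2 S.
Hypothesis Hk : forall f, c' f = if f \in S then swap_color p1 p2 (c f) else c f.
Hypotheses (n12 : p1 != p2) (nk1 : k != p1) (nk2 : k != p2).

Definition W v := [exists q : 'I_6, vfac F v q \in S].
Definition flip b := [exists t : 'I_3, bfac F b t \in S].
Definition cross b := [&& p1 \in c (bfac F b (i3 0)), p2 \in c (bfac F b (i3 0)) & k \in c (bfac F b (i3 1))].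
Definition hW b := [exists vp : Vertex * 'I_4, (vend F vp.1 vp.2 == (b, true)) && W vp.1].
Definition tW b := [exists vp : Vertex * 'I_4, (vend F vp.1 vp.2 == (b, false)) && W vp.1].

Lemma swpE x A : (x \in swap_color p1 p2 A) = (swp p1 p2 x \in A).
Proof. by rewrite inE. Qed.
Lemma swp1 : swp p1 p2 p1 = p2. Proof. by rewrite /swp eqxx. Qed.
Lemma swp2 : swp p1 p2 p2 = p1. Proof. by rewrite /swp eq_sym (negbTE n12) eqxx. Qed.
Lemma swpk : swp p1 p2 k = k. Proof. by rewrite /swp (negbTE nk1) (negbTE nk2). Qed.

Lemma swp_nF f x : ~~ inFij c p1 p2 f -> (swp p1 p2 x \in c f) = (x \in c f).
Proof.
rewrite /inFij negbK => /eqP h; rewrite /swp.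
case: (eqVneq x p1) => [-> | _]; first by rewrite h.
by case: (eqVneq x p2) => [-> | _].
Qed.

Lemma S_F f : f \in S -> inFij c p1 p2 f.
Proof. by case: HS => h _; apply: h. Qed.

Lemma memb' b t x : x \in c' (bfac F b t) = ((if flip b then swp p1 p2 x else x) \in c (bfac F b t)).
Proof.
rewrite Hk; case hS: (bfac F b t \in S).
  have -> : flip b by apply/existsP; exists t.
  by rewrite swpE.
case hf: (flip b) => //.
move/existsP: hf => [t' ht'].
rewrite swp_nF //; apply/negP => hF.
have H := (proj2 HS) (bfac F b t') (bfac F b t); rewrite ht' hS in H.
suff : true = false by [].
apply: H; rewrite /fadj (S_F ht') hF /=; apply/existsP; exists b; apply/existsP; exists t'.
by apply/existsP; exists t; rewrite !eqxx.
Qed.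

Lemma pos' l b : posbind F c' (pig (l (+) flip b)) k b = posbind F c (pig l) k b.
Proof.
rewrite /posbind !memb'; case: (flip b); rewrite ?addbT ?addbF ?swpk //.
by case: l; rewrite /pig /= ?swp1 ?swp2.
Qed.

Lemma ps_lt p : p \in ps -> p < 4.
Proof. by rewrite /ps !inE; case/or4P => /eqP ->. Qed.
Lemma l3_lt t : t \in [:: 0; 1; 2] -> t < 3.
Proof. by rewrite !inE; case/or3P => /eqP ->. Qed.
Lemma l6_mem q : q < 6 -> q \in [:: 0; 1; 2; 3; 4; 5].
Proof. by case: q => [|[|[|[|[|[|]]]]]]. Qed.

Lemma inF_slot v j : j < 6 -> inFij c p1 p2 (vfac F v (i6 j)) = F12s (bits c p1 v) (bits c p2 v) j.
Proof. by move=> hj; rewrite /inFij /F12s !(memslot Hc). Qed.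

Lemma Wslot v q : q < 6 -> W v -> (vfac F v (i6 q) \in S) = F12s (bits c p1 v) (bits c p2 v) q.
Proof.
move=> hq /existsP[q0 hq0].
pose ms := [seq vfac F v (i6 j) \in S | j <- iota 0 6].
have hms : forall j, j < 6 -> nth false ms j = (vfac F v (i6 j) \in S).
  by move=> j hj; rewrite /ms (nth_map 0) ?size_iota // nth_iota.
have := Loc3 (vchir F v) (exbits Hc p1 v) (exbits Hc p2 v) (_ : size ms = 6).
rewrite size_map size_iota => /(_ erefl); rewrite /loc3 => /implyP L.
have prem : all (fun p => all (fun t => all (fun t' =>
     (F12s (bits c p1 v) (bits c p2 v) (slotn (vchir F v) p t) && F12s (bits c p1 v) (bits c p2 v) (slotn (vchir F v) p t')) ==>
       (nth false ms (slotn (vchir F v) p t) == nth false ms (slotn (vchir F v) p t'))) [:: 0;1;2]) [:: 0;1;2]) ps.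
  apply/allP => p hp; apply/allP => t ht; apply/allP => t' ht'; apply/implyP => /andP[f1 f2].
  have hp4 := ps_lt hp; have ht3 := l3_lt ht; have ht3' := l3_lt ht'.
  rewrite !hms ?slotn_lt //; apply/eqP.
  rewrite -!inF_slot ?slotn_lt // in f1 f2.
  apply: (proj2 HS); rewrite /fadj f1 f2 /=.
  apply/existsP; exists (vend F v (inord p)).1; apply/existsP; exists (inord t); apply/existsP; exists (inord t').
  by rewrite !vok_slotn // !eqxx.
have H := L prem; clear L.
have hq0' : q0 = i6 (nat_of_ord q0) by rewrite /i6 inord_val.
have F0 : F12s (bits c p1 v) (bits c p2 v) (nat_of_ord q0).
  by rewrite -inF_slot // -hq0'; apply: S_F.
have E : forall j, j < 6 -> F12s (bits c p1 v) (bits c p2 v) j -> vfac F v (i6 j) \in S.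
  move=> j hj Fj.
  move/allP: H => /(_ j (l6_mem hj)) /allP /(_ (nat_of_ord q0) (l6_mem (ltn_ord q0))).
  move/implyP/(_ (introT andP (conj Fj F0))).
  by rewrite !hms // -hq0' hq0 => /eqP.
case Fq: (F12s (bits c p1 v) (bits c p2 v) q); first exact: E.
apply/negP => /S_F; by rewrite inF_slot // Fq.
Qed.

Lemma notW_slot v q : ~~ W v -> vfac F v q \notin S.
Proof. by move=> hw; apply/negP => h; move/negP: hw; apply; apply/existsP; exists q. Qed.

Lemma mem' v q x : q < 6 -> x \in c' (vfac F v (i6 q)) = ((if W v then swp p1 p2 x else x) \in c (vfac F v (i6 q))).
Proof.
move=> hq; rewrite Hk; case hS: (vfac F v (i6 q) \in S).
  have -> : W v by apply/existsP; exists (i6 q).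
  by rewrite swpE.
case hw: (W v) => //.
rewrite swp_nF //; rewrite inF_slot // -Wslot //; by rewrite hS.
Qed.



Lemma flip_pos v p : flip (vend F v p).1 = W v && F12p (vchir F v) (bits c p1 v) (bits c p2 v) (val p).
Proof.
rewrite /flip; case hw: (W v); rewrite ?andTb ?andFb.
  apply/idP/idP => [/existsP[t]|].
    rewrite vok_slot Wslot ?slotn_lt // /F12p.
    by case: t => [[|[|[|]]] ?] //= ->; rewrite ?orbT.
  rewrite /F12p => /or3P [h|h|h]; apply/existsP; [exists (i3 0) | exists (i3 1) | exists (i3 2)];
    by rewrite vok_slot Wslot ?slotn_lt // i3v.
apply/negbTE; apply/negP => /existsP[t ht]; rewrite vok_slot in ht.
by move/negbT/negP: hw; apply; apply/existsP; eexists; exact: ht.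
Qed.

Lemma flip_W v p : flip (vend F v p).1 -> W v.
Proof. by rewrite flip_pos => /andP[]. Qed.

Lemma bits1' v : bits c' p1 v = if W v then bits c p2 v else bits c p1 v.
Proof. by rewrite /bits !mem' //; case: (W v); rewrite ?swp1. Qed.
Lemma bits2' v : bits c' p2 v = if W v then bits c p1 v else bits c p2 v.
Proof. by rewrite /bits !mem' //; case: (W v); rewrite ?swp2. Qed.
Lemma bitsk' v : bits c' k v = bits c k v.
Proof. by rewrite /bits !mem' //; case: (W v); rewrite ?swpk. Qed.
Lemma bitsl' l v : bits c' (pig l) v =
  tl l (if W v then bits c p2 v else bits c p1 v) (if W v then bits c p1 v else bits c p2 v).
Proof. by case: l; rewrite /pig /tl ?bits1' ?bits2'. Qed.
Lemma bitsl l v : bits c (pig l) v = tl l (bits c p1 v) (bits c p2 v).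
Proof. by case: l. Qed.

Lemma cross_pos v p : cross (vend F v p).1 = CRn (vchir F v) (bits c p1 v) (bits c p2 v) (bits c k v) (val p).
Proof. by rewrite /cross /CRn !(memb_pos Hc) !i3v. Qed.

Lemma cross_posb b l : cross b -> posbind F c (pig l) k b.
Proof. by case/and3P => h1 h2 h3; case: l; rewrite /posbind /= ?h1 ?h2 h3. Qed.

Lemma hW_head v p b : vend F v p = (b, true) -> hW b = W v.
Proof.
move=> e; apply/idP/idP => [/existsP[[v' p'] /andP[/eqP e' hw]]| hw].
  by case: (end_uniq e' e) => ev _; rewrite -ev.
by apply/existsP; exists (v, p); rewrite /= e eqxx hw.
Qed.
Lemma tW_tail v p b : vend F v p = (b, false) -> tW b = W v.
Proof.
move=> e; apply/idP/idP => [/existsP[[v' p'] /andP[/eqP e' hw]]| hw].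
  by case: (end_uniq e' e) => ev _; rewrite -ev.
by apply/existsP; exists (v, p); rewrite /= e eqxx hw.
Qed.
Lemma hW_none b : endpos (b, true) = None -> hW b = false.
Proof.
move=> h; apply/negbTE; apply/negP => /existsP[[v p] /andP[/eqP e _]].
by have := endpos_none v p h; rewrite e eqxx.
Qed.
Lemma tW_narc b : ~~ isarc F b -> tW b = false.
Proof.
move=> h; apply/negbTE; apply/negP => /existsP[[v p] /andP[/eqP e _]].
by have := end_arc v p; rewrite e (negbTE h).
Qed.

Definition fpf (g : Binding -> bool) (d : Binding * bool) := (d.1, d.2 (+) g d.1).
Lemma fpfK g : involutive (fpf g).
Proof. by move=> [b l]; rewrite /fpf /= addbK. Qed.

Lemma eqn d : fpf flip (sg c' (fpf flip d)) = fpf (fun b => cross b && tW b) (sg c (fpf (fun b => cross b && hW b) d)).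
Proof.
case: d => b l; rewrite /fpf /=.
case hr: (posbind F c (pig l) k b); last first.
  have hc : cross b = false by apply/negP => /(cross_posb l); rewrite hr.
  rewrite hc /= !addbF /sg /= pos'; rewrite hr.
  by rewrite /= hc andFb addbF -addbA addbb addbF.
case E: (endpos (b, true)) => [[v p]|]; last first.
  rewrite (hW_none E) andbF addbF /sg /= pos' hr /= !nxt_none //.
  by rewrite (tW_narc (endpos_none_arc E)) andbF addbF -addbA addbb addbF.
have e := endposP E; rewrite /= in e.
have hr1 : posbind F c (pig (l (+) (cross b && hW b))) k b.
  case hcb: (cross b && hW b); last by rewrite addbF.
  by move/andP: hcb => [/cross_posb -> _].
have fb : flip b = W v && F12p (vchir F v) (bits c p1 v) (bits c p2 v) (val p) by rewrite -flip_pos e.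
have cb : cross b = CRn (vchir F v) (bits c p1 v) (bits c p2 v) (bits c k v) (val p) by rewrite -cross_pos e.
have hb : hW b = W v by rewrite (hW_head e).
have [h1 _ _] := nxt_spec Hc hr1 e.
have hij1 : ijbind F c (pig (l (+) (cross b && hW b))) k (vend F v p).1 by rewrite e; apply: pos_ij.
have [vq _ _ _ _] := loc1P Hc hij1.
have := Loc4 (vchir F v) (W v) l
  (exbits Hc p1 v) (exbits Hc p2 v) (exbits Hc k v) (ltn_ord p).
rewrite /loc4 -bitsl -(pos_loc Hc) e hr /= => /andP[/eqP hq /eqP hl].
have eq_lq : lq c' (l (+) flip b) (v, p) = lq c (l (+) (cross b && hW b)) (v, p).
  by rewrite /lq /= bitsl' bitsk' !bitsl fb cb hb hq.
rewrite /sg /= pos' hr hr1 /=.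
have -> : nxt c' (l (+) flip b) b = (vend F v (lq c (l (+) (cross b && hW b)) (v, p))).1.
  by rewrite /nxt E eq_lq.
have ey : nxt c (l (+) (cross b && hW b)) b = (vend F v (lq c (l (+) (cross b && hW b)) (v, p))).1.
  by rewrite /nxt E.
rewrite -ey; congr pair.
rewrite (tW_tail h1) ey flip_pos cross_pos.
rewrite vq fb cb hb -hl !bitsl /=.
by rewrite -addbA addbb addbF.
Qed.


Lemma fpf_inj g : injective (fpf g). Proof. exact: inv_inj (fpfK g). Qed.
Definition fpp g : {perm (Binding * bool)} := perm (@fpf_inj g).

Lemma odd_fpp g : odd_perm (fpp g) = odd #|[set b | g b]|.
Proof.
move: {2}#|_| (erefl #|[set b | g b]|) => n; elim: n g => [|n IH] g hn.
  have g0 : forall b, g b = false.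
    move=> b; apply/negbTE/negP => hb; move/eqP: hn; rewrite cards_eq0 => /eqP h.
    by have := in_set0 b; rewrite -h inE hb.
  have -> : fpp g = 1%g.
    by apply/permP => d; rewrite permE perm1 /fpf g0 addbF; case: d.
  by rewrite odd_perm1 hn.
have : 0 < #|[set b | g b]| by rewrite hn.
rewrite card_gt0 => /set0Pn [b0]; rewrite inE => hb0.
pose g' := fun b => g b && (b != b0).
have hn' : #|[set b | g' b]| = n.
  have -> : [set b | g' b] = [set b | g b] :\ b0 by apply/setP => b; rewrite !inE andbC.
  by move: hn; rewrite (cardsD1 b0) inE hb0 add1n => [[]].
have -> : fpp g = (fpp g' * tperm (b0, false) (b0, true))%g.
  apply/permP => [[b l]]; rewrite permM !permE /fpf /=.
  case: (eqVneq b b0) => [->|ne].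
    by rewrite /g' eqxx andbF addbF hb0; case: l; rewrite !xpair_eqE eqxx.
  rewrite /g' ne andbT; case: ifP => [/eqP [e _]|_]; first by rewrite e eqxx in ne.
  by case: ifP => [/eqP [e _]|_] //; rewrite e eqxx in ne.
by rewrite odd_permM IH // odd_tperm /= xpair_eqE eqxx /= addbT hn hn'.
Qed.

Lemma perm_eqn : (fpp flip * sgp Hc' * fpp flip)%g =
  (fpp (fun b => cross b && hW b) * sgp Hc * fpp (fun b => cross b && tW b))%g.
Proof. by apply/permP => d; rewrite !permM !permE ?sgpE eqn. Qed.

Lemma even_inv (T : finType) (A : {set T}) (f : T -> T) :
  {in A, forall x, f x \in A} -> {in A, forall x, f (f x) = x} -> {in A, forall x, f x != x} ->
  ~~ odd #|A|.
Proof.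
move=> h1 h2 h3; have [n leAn] := ubnP #|A|; elim: n => // n IHn in A leAn h1 h2 h3 *.
case: (set_0Vmem A) => [-> | [x hx]]; first by rewrite cards0.
have hfx := h1 x hx; have nfx := h3 x hx.
pose A' := A :\ x :\ f x.
have cA : #|A| = (#|A'|).+2.
  rewrite (cardsD1 x) hx (cardsD1 (f x) (A :\ x)) !inE nfx hfx.
  by rewrite /A'.
have hA' : forall y, y \in A' -> [/\ y \in A, y != x & y != f x].
  by move=> y; rewrite !inE => /and3P[a b d].
rewrite cA /= negbK; apply: IHn.
- by move: leAn; rewrite cA ltnS => /ltnW.
- move=> y /hA'[ya yx yfx]; rewrite !inE h1 // andbT; apply/andP; split.
    by apply: contra yx => /eqP e; rewrite -(h2 y ya) e h2.
  by apply: contra yfx => /eqP e; rewrite -(h2 y ya) e.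
- by move=> y /hA'[ya _ _]; apply: h2.
- by move=> y /hA'[ya _ _]; apply: h3.
Qed.

Definition bp (e : Vertex * 'I_4) := (vend F e.1 e.2).1.

Lemma oe_ex e : exists e', vend F e'.1 e'.2 = (bp e, ~~ (vend F e.1 e.2).2).
Proof. by apply: arc_end; apply: end_arc. Qed.

Definition oe e := if endpos (bp e, ~~ (vend F e.1 e.2).2) is Some e' then e' else e.

Lemma oeP e : vend F (oe e).1 (oe e).2 = (bp e, ~~ (vend F e.1 e.2).2).
Proof.
rewrite /oe; case E: endpos => [e'|]; first exact: endposP.
have [[v p] h] := oe_ex e.
move: (vend F e.1 e.2) E h => [b s] E h.
by have := endpos_none v p E; rewrite /= h eqxx.
Qed.

Lemma pair_eta (e : Vertex * 'I_4) : (e.1, e.2) = e. Proof. by case: e. Qed.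

Lemma handshake : odd #|[set b | cross b && hW b]| = odd #|[set b | cross b && tW b]|.
Proof.
pose A := [set e : Vertex * 'I_4 | W e.1 && posbind F c (pig false) k (bp e)].
pose XC := [set e : Vertex * 'I_4 | cross (bp e)].
pose H := [set e : Vertex * 'I_4 | (vend F e.1 e.2).2].
have cA := cardsID XC A.
have cC := cardsID H (A :&: XC).
have eH : #|A :&: XC :&: H| = #|[set b | cross b && hW b]|.
  have -> : [set b | cross b && hW b] = bp @: (A :&: XC :&: H).
    apply/setP => b; rewrite inE; apply/andP/imsetP => [[hc /existsP[e /andP[/eqP he hw]]]|[e]].
      exists e; last by rewrite /bp he.
      by rewrite !inE hw /bp he /= hc (cross_posb false hc).
    rewrite !inE => /andP[/andP[/andP[hw hp] hc] hh] ->; split => //.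
    apply/existsP; exists e; rewrite hw andbT; apply/eqP.
    by rewrite [LHS]surjective_pairing hh.
  apply/esym/card_in_imset => e e'; rewrite !inE => /andP[_ h] /andP[_ h'] eb.
  have ee : vend F e'.1 e'.2 = vend F e.1 e.2.
    by rewrite [LHS]surjective_pairing [RHS]surjective_pairing h h' -/(bp e) -/(bp e') eb.
  by have := end_uniq ee (erefl _); rewrite !pair_eta.
have eT : #|(A :&: XC) :\: H| = #|[set b | cross b && tW b]|.
  have -> : [set b | cross b && tW b] = bp @: ((A :&: XC) :\: H).
    apply/setP => b; rewrite inE; apply/andP/imsetP => [[hc /existsP[e /andP[/eqP he hw]]]|[e]].
      exists e; last by rewrite /bp he.
      by rewrite !inE hw /bp he /= hc (cross_posb false hc).
    rewrite !inE => /andP[hh /andP[/andP[hw hp] hc]] ->; split => //.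
    apply/existsP; exists e; rewrite hw andbT; apply/eqP.
    by rewrite [LHS]surjective_pairing (negbTE hh).
  apply/esym/card_in_imset => e e'; rewrite !inE => /andP[h _] /andP[h' _] eb.
  have ee : vend F e'.1 e'.2 = vend F e.1 e.2.
    by rewrite [LHS]surjective_pairing [RHS]surjective_pairing (negbTE h) (negbTE h') -/(bp e) -/(bp e') eb.
  by have := end_uniq ee (erefl _); rewrite !pair_eta.
have evA : ~~ odd #|A|.
  pose pe (e : Vertex * 'I_4) := (e.1, lq c false e).
  have P : forall e, e \in A -> [/\ pe e \in A, pe (pe e) = e & pe e != e].
    move=> [v p]; rewrite inE /= => /andP[hw hp].
    have [vq hne _ hl [_ hpos]] := loc1P Hc (pos_ij hp).
    split.
    - by rewrite inE /= hw /bp /= hpos.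
    - by rewrite /pe /= /lq /= hl inord_val.
    - by rewrite /pe /= xpair_eqE eqxx.
  apply: (even_inv (f := pe)) => e /P[]//.
have evK : ~~ odd #|A :\: XC|.
  have P : forall e, e \in A :\: XC -> [/\ oe e \in A :\: XC, oe (oe e) = e & oe e != e].
    move=> e; rewrite !inE => /andP[hc /andP[hw hp]].
    have hb : bp (oe e) = bp e by rewrite /bp oeP.
    have hfl : flip (bp e).
      rewrite /bp flip_pos hw /=.
      move: hp hc; rewrite /bp /posbind /cross /F12p /F12s !(memb_pos Hc) !i3v //.
      by case/andP => -> ->; rewrite andbT /= => ->.
    split.
    - rewrite hb hc hp andbT /=.
      by move: hfl; rewrite -hb /bp => /flip_W.
    - have e1 : vend F (oe (oe e)).1 (oe (oe e)).2 = vend F e.1 e.2.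
        by rewrite oeP hb oeP /= negbK /bp -surjective_pairing.
      by have := end_uniq e1 (erefl _); rewrite !pair_eta.
    - apply/negP => /eqP ee; have := oeP e; rewrite ee.
      by case: (vend F e.1 e.2) => b' s' [_]; case: s'.
  apply: (even_inv (f := oe)) => e /P[]//.
have : odd #|A| = odd #|A :&: XC| (+) odd #|A :\: XC| by rewrite -cA oddD.
rewrite (negbTE evA) (negbTE evK) => h.
have h2 : odd #|A :&: XC| = false by rewrite h; case: (odd _).
move: h2; rewrite -cC oddD eH eT.
by case: (odd _); case: (odd _).
Qed.

Lemma rel_flip d : rel c' (fpf flip d) = rel c d.
Proof. by case: d => b l; rewrite /rel /fpf /= pos'. Qed.

Lemma kempe_odd : odd (theta_pos F c p1 k + theta_pos F c p2 k) = odd (theta_pos F c' p1 k + theta_pos F c' p2 k).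
Proof.
have P := congr1 (@odd_perm _) perm_eqn; rewrite !odd_permM !odd_fpp handshake in P.
have Hs : odd_perm (sgp Hc') = odd_perm (sgp Hc).
  move: P; case: (odd #|[set b | flip b]|); case: (odd #|[set b | cross b && tW b]|);
  by case: (odd_perm (sgp Hc)); case: (odd_perm (sgp Hc')).
move: Hs; rewrite /odd_perm (card_porbits Hc) (card_porbits Hc').
have -> : #|[set d | ~~ rel c' d]| = #|[set d | ~~ rel c d]|.
  have -> : [set d | ~~ rel c' d] = fpf flip @: [set d | ~~ rel c d].
    apply/setP => d; rewrite inE; apply/idP/imsetP => [h|[d0 h0 ->]].
      by exists (fpf flip d); rewrite ?inE ?fpfK // -rel_flip fpfK.
    by rewrite rel_flip; move: h0; rewrite inE.
  by rewrite card_imset //; apply: fpf_inj.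
rewrite !oddD.
move: (odd (theta_pos F c p1 k)) (odd (theta_pos F c p2 k)) (odd (theta_pos F c' p1 k))
  (odd (theta_pos F c' p2 k)) (odd #|[set d | ~~ rel c d]|) => a b a' b' i.
move: (odd #|_|) => x.
by case: x; case: a; case: b; case: a'; case: b'; case: i.
Qed.
End Kempe.
End Pig.
End Bridge.

Theorem lemma2p7 (N : nat) (Facet Binding Vertex : finType)
  (F : foam Facet Binding Vertex) (c c' : Facet -> {set 'I_N})
  (p1 p2 k : 'I_N) :
  val p1 = 0 -> val p2 = 1 -> 2 <= val k ->
  closed_foam F N -> coloring F c -> coloring F c' ->
  kempe_move F p1 p2 c c' ->
  theta_pos F c p1 k + theta_pos F c p2 k
    = theta_pos F c' p1 k + theta_pos F c' p2 k %[mod 2].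
Proof.
move=> h1 h2 hk HF Hc Hc' [S [HS Hk]].
have n12 : p1 != p2 by apply/eqP => e; move: h1; rewrite e h2.
have nk1 : k != p1 by apply/eqP => e; move: hk; rewrite e h1.
have nk2 : k != p2 by apply/eqP => e; move: hk; rewrite e h2.
by rewrite !modn2 (kempe_odd HF Hc Hc' HS Hk n12 nk1 nk2).
Qed.
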